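(* Let $k\ge 1$, $n=2k$, $a\in\mathbb{D}\setminus\{0\}$, $\sigma_a(z)=\frac{z-a}{1-\overline{a}z}$, $h(z)=z^{n}$, and let $B=\sigma_a\circ h\circ\sigma_a^{-1}$ be a reducible Blaschke product of degree $2k$ with conjugate factor $\sigma_a$. List the $2k$ distinct $2k$-th roots of $a$ as $\omega_1,\dots,\omega_{2k}$ in increasing order of principal argument in $[0,2\pi)$ (indices taken modulo $2k$), so that the zeros of $B$ are $\sigma_a(\omega_1),\dots,\sigma_a(\omega_{2k})$. Then: (1) for every $j$, the hyperbolic geodesic in the Poincaré disk through the ''opposite'' zeros $\sigma_a(\omega_j)$ and $\sigma_a(-\omega_j)=\sigma_a(\omega_{j+k})$ passes through $-a$; thus $-a$ lies at the intersection of the hyperbolic geodesics through opposite pairs of zeros of $B$; (2) for every $j$, the unsigned angle at $\sigma_a(\omega_j)$ between the hyperbolic geodesic through $\sigma_a(\omega_{j-1}),\sigma_a(\omega_j)$ and the hyperbolic geodesic through $\sigma_a(\omega_j),\sigma_a(\omega_{j+1})$ equals the unsigned angle at $\omega_j$ between the hyperbolic geodesic through $\omega_{j-1},\omega_j$ and the hyperbolic geodesic through $\omega_j,\omega_{j+1}$.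
   Context: $\mathbb{D}$ is the open unit disk with the Poincaré (hyperbolic) metric; its geodesics are the diameters of $\mathbb{D}$ and the arcs in $\mathbb{D}$ of circles meeting the unit circle orthogonally. A degree-$n$ Blaschke product $B$ is called reducible if $B=\sigma_a\circ h\circ\sigma_a^{-1}$ for some $a\in\mathbb{D}$, with $\sigma_a(z)=\frac{z-a}{1-\overline{a}z}$, $h(z)=z^n$; $\sigma_a$ is its conjugate factor. *)

(* Defs.v *)
From Stdlib Require Import Reals Arith.
From Coquelicot Require Import Coquelicot.
Open Scope R_scope.

Definition in_disk (z : C) : Prop := Cmod z < 1.

Definition sigma_a (a z : C) : C := Cdiv (Cminus z a) (Cminus 1 (Cmult (Cconj a) z)).

(** Hyperbolic geodesics of the Poincare disk, given by data:
    - [Diam u]   : the diameter of D in the direction u (u <> 0),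
    - [Orth c r] : the arc in D of the circle |z - c| = r meeting the unit
                   circle orthogonally (|c|^2 = 1 + r^2). *)
Inductive geod : Type := Diam (u : C) | Orth (c : C) (r : R).

Definition valid_geod (g : geod) : Prop :=
  match g with
  | Diam u => u <> 0%C
  | Orth c r => 0 < r /\ (Cmod c) ^ 2 = 1 + r ^ 2
  end.

Definition on_geod (g : geod) (z : C) : Prop :=
  in_disk z /\
  match g with
  | Diam u => Im (Cmult z (Cconj u)) = 0
  | Orth c r => Cmod (Cminus z c) = r
  end.

Definition geod_through (g : geod) (p q : C) : Prop :=
  valid_geod g /\ on_geod g p /\ on_geod g q.

Definition tangent (g : geod) (p : C) : C :=
  match g with
  | Diam u => u
  | Orth c r => Cmult Ci (Cminus p c)
  end.

(** Unsigned angle in [0, pi/2] between the (undirected) lines spanned by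
    the nonzero vectors d1 and d2. *)
Definition line_angle (d1 d2 : C) : R :=
  acos (Rabs (Re (Cmult d1 (Cconj d2))) / (Cmod d1 * Cmod d2)).

Definition geod_angle (g1 g2 : geod) (p : C) : R :=
  line_angle (tangent g1 p) (tangent g2 p).

Definition is_arg (z : C) (t : R) : Prop :=
  0 <= t < 2 * PI /\ z = (Cmod z * cos t, Cmod z * sin t).

(* Main.v *)
Require Import Defs.
From Stdlib Require Import Reals Arith Lra Lia Psatz.
From Coquelicot Require Import Coquelicot.
Open Scope R_scope.


Lemma Cmod_sq (z : C) : Cmod z ^ 2 = fst z ^ 2 + snd z ^ 2.
Proof. unfold Cmod. rewrite pow2_sqrt; [reflexivity| nra]. Qed.

Lemma Ceq (z w : C) : fst z = fst w -> snd z = snd w -> z = w.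
Proof. destruct z, w; simpl; intros; subst; reflexivity. Qed.

Lemma one_minus_ne (x y : C) : Cmod x < 1 -> Cmod y < 1 -> (1 - x * y)%C <> 0%C.
Proof.
  intros Hx Hy H. assert (E : (x*y)%C = 1%C).
  { destruct x, y; pose proof (f_equal fst H); pose proof (f_equal snd H); simpl in *; apply Ceq; simpl; lra. }
  apply (f_equal Cmod) in E. rewrite Cmod_mult, Cmod_1 in E.
  pose proof (Cmod_ge_0 x); pose proof (Cmod_ge_0 y). nra.
Qed.

Lemma one_plus_ne (x y : C) : Cmod x < 1 -> Cmod y < 1 -> (1 + x * y)%C <> 0%C.
Proof.
  intros Hx Hy H. assert (E : (x*y)%C = (-1)%C).
  { destruct x, y; pose proof (f_equal fst H); pose proof (f_equal snd H); simpl in *; apply Ceq; simpl; lra. }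
  apply (f_equal Cmod) in E. rewrite Cmod_mult in E.
  replace (Cmod (-1)%C) with 1 in E by (rewrite <- Cmod_m1; f_equal; apply Ceq; simpl; lra).
  pose proof (Cmod_ge_0 x); pose proof (Cmod_ge_0 y). nra.
Qed.

Lemma Cmod_conj (z : C) : Cmod (Cconj z) = Cmod z.
Proof. destruct z; unfold Cmod, Cconj; simpl; f_equal; ring. Qed.

Lemma par_lemma (t T : C) : T <> 0%C -> Im (t * Cconj T) = 0 ->
  t = (RtoC (Re (t * Cconj T) / (Cmod T)^2) * T)%C.
Proof.
  intros HT HI. rewrite Cmod_sq.
  assert (Hn : fst T ^ 2 + snd T ^ 2 <> 0).
  { intro E. apply HT. destruct T; simpl in *. apply Ceq; simpl; nra. }
  destruct t as [t1 t2], T as [u1 u2]; simpl in *.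
  unfold Cmult, Cconj, RtoC in *; simpl in *.
  assert (Hn' : u1 * u1 + u2 * u2 <> 0) by (intro; apply Hn; nra).
  apply Ceq; simpl; field_simplify_eq. all: try exact Hn'. 
  all: assert (E: t2 * u1 = t1 * u2) by lra.
  - replace (u1*t2*u2) with ((t2*u1)*u2) by ring. rewrite E. ring.
  - replace (t1*u1*u2) with ((t1*u2)*u1) by ring. rewrite <- E. ring.
Qed.

Definition Tp (P Q : C) : C := ((Q - P) * (1 - P * Cconj Q))%C.

Lemma Tp_ne P Q : in_disk P -> in_disk Q -> P <> Q -> Tp P Q <> 0%C.
Proof.
  unfold in_disk, Tp; intros HP HQ HPQ. apply Cmult_neq_0.
  - apply Cminus_eq_contra; auto.
  - apply one_minus_ne; auto. rewrite Cmod_conj; auto.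
Qed.

Lemma Cmod_eq_sq (z : C) (r : R) : Cmod z = r -> fst z ^ 2 + snd z ^ 2 = r ^ 2.
Proof. intro H. rewrite <- Cmod_sq, H. reflexivity. Qed.

Lemma tangent_par g P Q : valid_geod g -> on_geod g P -> on_geod g Q -> P <> Q ->
  exists l, l <> 0 /\ tangent g P = (RtoC l * Tp P Q)%C.
Proof.
  intros Hg [HdP HP] [HdQ HQ] HPQ.
  pose proof (Tp_ne P Q HdP HdQ HPQ) as HT.
  assert (Hpar : tangent g P <> 0%C /\ Im (tangent g P * Cconj (Tp P Q)) = 0).
  { destruct g as [u | c r]; simpl in *.
    - split; [exact Hg|].
      pose proof (par_lemma P u Hg HP) as EP.
      pose proof (par_lemma Q u Hg HQ) as EQ.
      set (s := Re (P * Cconj u) / Cmod u ^ 2) in EP.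
      set (t := Re (Q * Cconj u) / Cmod u ^ 2) in EQ.
      unfold Tp. rewrite EP, EQ. clearbody s t. destruct u as [u1 u2].
      unfold Cmult, Cminus, Cplus, Copp, Cconj, RtoC; simpl. ring.
    - destruct Hg as [Hr Hc]. split.
      + apply Cmult_neq_0; [exact Ci_nz|]. apply Cminus_eq_contra.
        intro E; subst P. unfold Cminus in HP. rewrite Cplus_opp_r, Cmod_0 in HP. lra.
      + apply Cmod_eq_sq in HP. apply Cmod_eq_sq in HQ.
        assert (Hc2 : fst c ^2 + snd c^2 = 1 + r^2) by (rewrite <- Cmod_sq; simpl in Hc |- *; lra).
        clear Hc.
        destruct P as [p1 p2], Q as [q1 q2], c as [c1 c2]. unfold Tp.
        simpl in *.
        assert (hP : p1^2 + p2^2 - 2*(p1*c1+p2*c2) + 1 = 0) by nra.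
        assert (hQ : q1^2 + q2^2 - 2*(q1*c1+q2*c2) + 1 = 0) by nra.
        unfold Cmult, Cminus, Cplus, Copp, Cconj, Ci, RtoC; simpl.
        transitivity ((p1*q1+p2*q2 - (q1*c1+q2*c2)) * (p1^2 + p2^2 - 2*(p1*c1+p2*c2) + 1)
                      + ((p1*c1+p2*c2) - (p1^2+p2^2)) * (q1^2 + q2^2 - 2*(q1*c1+q2*c2) + 1)).
        * ring.
        * rewrite hP, hQ. ring. }
  destruct Hpar as [Hnz HI].
  exists (Re (tangent g P * Cconj (Tp P Q)) / Cmod (Tp P Q) ^ 2). split.
  - intro E. apply Hnz. rewrite (par_lemma _ _ HT HI), E. apply Ceq; simpl; ring.
  - apply par_lemma; auto.
Qed.

Lemma div_cancel (c x y : R) : c <> 0 -> (c * x) / (c * y) = x / y.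
Proof.
  intro Hc. destruct (Req_dec y 0) as [->|Hy].
  - rewrite Rmult_0_r. unfold Rdiv. rewrite Rinv_0. ring.
  - field; auto.
Qed.

Lemma angle_inv (d1 d2 k : C) (al be : R) : al <> 0 -> be <> 0 -> k <> 0%C ->
  line_angle (RtoC al * (k * d1))%C (RtoC be * (k * d2))%C = line_angle d1 d2.
Proof.
  intros Ha Hb Hk. unfold line_angle. f_equal.
  assert (ER : Re (RtoC al * (k*d1) * Cconj (RtoC be * (k*d2)))%C
               = (al*be*Cmod k^2) * Re (d1 * Cconj d2)%C).
  { rewrite Cmod_sq. destruct k, d1, d2; unfold Cmult, Cconj, RtoC; simpl. ring. }
  rewrite ER. rewrite !Cmod_mult, !Cmod_R.
  rewrite !Rabs_mult, (Rabs_pos_eq (Cmod k ^ 2)) by (apply pow_le, Cmod_ge_0).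
  replace (Rabs al * (Cmod k * Cmod d1) * (Rabs be * (Cmod k * Cmod d2)))
    with ((Rabs al * Rabs be * Cmod k ^ 2) * (Cmod d1 * Cmod d2)) by ring.
  apply div_cancel.
  apply Cmod_gt_0 in Hk. apply Rabs_no_R0 in Ha. apply Rabs_no_R0 in Hb.
  apply Rmult_integral_contrapositive; split; [apply Rmult_integral_contrapositive; auto|].
  apply pow_nonzero; lra.
Qed.

Lemma den_ne (a p : C) : in_disk a -> in_disk p -> (1 - Cconj a * p)%C <> 0%C.
Proof. intros; apply one_minus_ne; [rewrite Cmod_conj|]; auto. Qed.

Lemma den_ne' (a p : C) : in_disk a -> in_disk p -> (1 - a * Cconj p)%C <> 0%C.
Proof. intros; apply one_minus_ne; [|rewrite Cmod_conj]; auto. Qed.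

Lemma conj_den (a q : C) : Cconj (1 - Cconj a * q)%C = (1 - a * Cconj q)%C.
Proof. destruct a, q; apply Ceq; unfold Cconj, Cminus, Cplus, Copp, Cmult; simpl; ring. Qed.

Lemma conj_sigma a q : in_disk a -> in_disk q ->
  Cconj (sigma_a a q) = ((Cconj q - Cconj a) / (1 - a * Cconj q))%C.
Proof.
  intros Ha Hq. unfold sigma_a. rewrite Cdiv_conj by (apply den_ne; auto).
  rewrite conj_den. f_equal. destruct a, q; apply Ceq; unfold Cconj, Cminus, Cplus, Copp, Cmult; simpl; ring.
Qed.

Lemma mobius_T a p q : in_disk a -> in_disk p -> in_disk q ->
  Tp (sigma_a a p) (sigma_a a q) =
  (RtoC ((1 - Cmod a ^ 2) ^ 2 / Cmod (1 - Cconj a * q)%C ^ 2) *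
   (/ ((1 - Cconj a * p) * (1 - Cconj a * p)) * Tp p q))%C.
Proof.
  intros Ha Hp Hq.
  pose proof (den_ne a p Ha Hp). pose proof (den_ne a q Ha Hq). pose proof (den_ne' a q Ha Hq).
  assert (Hm : Cmod (1 - Cconj a * q)%C ^ 2 <> 0).
  { apply pow_nonzero. apply Rgt_not_eq. apply Cmod_gt_0. auto. }
  rewrite RtoC_div by exact Hm.
  rewrite (RtoC_pow (1 - Cmod a ^ 2) 2), RtoC_minus, !Cmod2_conj, conj_den.
  unfold Tp. rewrite conj_sigma by auto. unfold sigma_a.
  field. auto.
Qed.

Lemma disk_sq (z : C) : in_disk z -> fst z ^ 2 + snd z ^ 2 < 1.
Proof.
  unfold in_disk; intro H. rewrite <- Cmod_sq. pose proof (Cmod_ge_0 z). nra.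
Qed.

Lemma geod_exists (P Q : C) : in_disk P -> in_disk Q -> P <> Q ->
  exists g, geod_through g P Q.
Proof.
  intros HP HQ HPQ.
  pose proof (disk_sq P HP) as HP2. pose proof (disk_sq Q HQ) as HQ2.
  destruct (Req_dec (Im (P * Cconj Q)%C) 0) as [HD|HD].
  - destruct (Ceq_dec P 0) as [HP0|HP0].
    + subst P. exists (Diam Q). unfold geod_through, valid_geod, on_geod.
      split; [auto|]. split; split; auto; destruct Q; simpl; ring.
    + exists (Diam P). unfold geod_through, valid_geod, on_geod.
      split; [auto|]. split; split; auto.
      * destruct P; simpl; ring.
      * destruct P, Q; simpl in *; lra.
  - destruct P as [p1 p2], Q as [q1 q2]. simpl in HD, HP2, HQ2.
    set (A := (p1^2+p2^2+1)/2). set (B := (q1^2+q2^2+1)/2).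
    set (d := p1*q2 - p2*q1).
    assert (Hd : d <> 0) by (unfold d; intro; apply HD; lra).
    set (c1 := (A*q2 - B*p2)/d). set (c2 := (p1*B - q1*A)/d).
    assert (HA : p1*c1 + p2*c2 = A) by (unfold c1, c2, d; field; exact Hd).
    assert (HB : q1*c1 + q2*c2 = B) by (unfold c1, c2, d; field; exact Hd).
    clearbody c1 c2. unfold A, B in *.
    exists (Orth (c1, c2) (Cmod ((p1,p2) - (c1,c2))%C)).
    assert (EP : Cmod ((p1,p2) - (c1,c2))%C ^ 2 = c1^2 + c2^2 - 1).
    { rewrite Cmod_sq. simpl. nra. }
    assert (EQ : Cmod ((q1,q2) - (c1,c2))%C ^ 2 = c1^2 + c2^2 - 1).
    { rewrite Cmod_sq. simpl. nra. }
    unfold geod_through, valid_geod, on_geod. split; [split|split; split; auto].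
    + apply Cmod_gt_0. intro E.
      pose proof (f_equal fst E) as E1; pose proof (f_equal snd E) as E2. simpl in E1, E2.
      assert (p1 = c1) by lra. assert (p2 = c2) by lra. subst. nra.
    + rewrite Cmod_sq, EP. simpl. ring.
    + pose proof (Cmod_ge_0 ((q1,q2) - (c1,c2))%C).
      pose proof (Cmod_ge_0 ((p1,p2) - (c1,c2))%C).
      apply Rsqr_inj; auto. unfold Rsqr. simpl in EP, EQ. lra.
Qed.

Lemma coll g P Q Z (l m : R) : valid_geod g -> on_geod g P -> on_geod g Q -> in_disk Z ->
  Z = (RtoC l * P + RtoC m * Q)%C ->
  Cmod Z ^ 2 + 1 = l * (Cmod P ^ 2 + 1) + m * (Cmod Q ^ 2 + 1) ->
  on_geod g Z.
Proof.
  intros Hg [_ HP] [_ HQ] HZ EZ N. split; [exact HZ|].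
  rewrite !Cmod_sq in N.
  destruct g as [u | c r]; cbn [valid_geod on_geod] in *.
  - assert (L : Im (Z * Cconj u)%C = l * Im (P * Cconj u)%C + m * Im (Q * Cconj u)%C).
    { subst Z. destruct P, Q, u; simpl. ring. }
    rewrite L, HP, HQ. ring.
  - destruct Hg as [Hr Hc].
    apply Cmod_eq_sq in HP. apply Cmod_eq_sq in HQ.
    assert (Hc2 : fst c ^2 + snd c^2 = 1 + r^2) by (rewrite <- Cmod_sq; simpl in Hc |- *; lra).
    clear Hc.
    pose proof (Cmod_ge_0 (Z - c)%C).
    apply Rsqr_inj; [auto|lra|]. unfold Rsqr.
    assert (E : Cmod (Z - c)%C ^ 2 = r ^ 2).
    { rewrite Cmod_sq. subst Z. destruct P as [p1 p2], Q as [q1 q2], c as [c1 c2].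
      simpl in *.
      set (z1 := l * p1 - 0 * p2 + (m * q1 - 0 * q2)) in *.
      set (z2 := l * p2 + 0 * p1 + (m * q2 + 0 * q1)) in *.
      assert (Ez1 : z1 = l*p1 + m*q1) by (unfold z1; ring).
      assert (Ez2 : z2 = l*p2 + m*q2) by (unfold z2; ring).
      clearbody z1 z2.
      transitivity ((z1^2+z2^2+1 - (l*(p1^2+p2^2+1) + m*(q1^2+q2^2+1)))
        + l * ((p1 + - c1)^2 + (p2 + - c2)^2 - r^2) + m * ((q1 + - c1)^2 + (q2 + - c2)^2 - r^2)
        + (1 - l - m) * (c1^2+c2^2 - 1 - r^2) + r^2).
      - rewrite Ez1, Ez2. ring.
      - simpl in *. rewrite N, HP, HQ, Hc2. ring. }
    simpl in E. lra.
Qed.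

Lemma conj_den2 (a q : C) : Cconj (1 + Cconj a * q)%C = (1 + a * Cconj q)%C.
Proof. destruct a, q; apply Ceq; unfold Cconj, Cminus, Cplus, Copp, Cmult; simpl; ring. Qed.

Lemma conj_opp (q : C) : Cconj (- q)%C = (- Cconj q)%C.
Proof. destruct q; apply Ceq; unfold Cconj, Copp; simpl; ring. Qed.

Lemma opp_coll (a w : C) : in_disk a -> in_disk w ->
  let l := Cmod (1 - Cconj a * w)%C ^ 2 / (2 * (1 + Cmod w ^ 2)) in
  let m := Cmod (1 + Cconj a * w)%C ^ 2 / (2 * (1 + Cmod w ^ 2)) in
  (- a)%C = (RtoC l * sigma_a a w + RtoC m * sigma_a a (- w))%C /\
  Cmod (- a)%C ^ 2 + 1 = l * (Cmod (sigma_a a w) ^ 2 + 1) + m * (Cmod (sigma_a a (- w))%C ^ 2 + 1).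
Proof.
  intros Ha Hw l m.
  assert (Hw' : in_disk (- w)%C) by (unfold in_disk in *; rewrite Cmod_opp; auto).
  pose proof (den_ne a w Ha Hw) as D1.
  pose proof (den_ne a (-w)%C Ha Hw') as D2.
  pose proof (den_ne' a w Ha Hw) as D3.
  pose proof (den_ne' a (-w)%C Ha Hw') as D4.
  assert (D5 : (1 + Cconj a * w)%C <> 0%C).
  { apply one_plus_ne; [rewrite Cmod_conj|]; auto. }
  assert (D6 : (1 + a * Cconj w)%C <> 0%C).
  { apply one_plus_ne; [|rewrite Cmod_conj]; auto. }
  assert (Hpos : 2 * (1 + Cmod w ^ 2) <> 0) by (pose proof (pow2_ge_0 (Cmod w)); lra).
  assert (D7 : (2 * (1 + w * Cconj w))%C <> 0%C).
  { rewrite <- Cmod2_conj. rewrite <- RtoC_plus, <- RtoC_mult. intro E.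
    apply Hpos. apply RtoC_inj. exact E. }
  assert (D8 : (1 + w * Cconj w)%C <> 0%C).
  { intro E; apply D7; rewrite E; apply Ceq; simpl; ring. }
  assert (D9 : (2)%C <> 0%C).
  { intro E; apply D7; rewrite E; apply Ceq; simpl; ring. }
  assert (Hl : RtoC l = ((1 - Cconj a * w) * (1 - a * Cconj w) / (2 * (1 + w * Cconj w)))%C).
  { unfold l. rewrite RtoC_div by exact Hpos. rewrite RtoC_mult, RtoC_plus, !Cmod2_conj, conj_den.
    reflexivity. }
  assert (Hm : RtoC m = ((1 + Cconj a * w) * (1 + a * Cconj w) / (2 * (1 + w * Cconj w)))%C).
  { unfold m. rewrite RtoC_div by exact Hpos. rewrite RtoC_mult, RtoC_plus, !Cmod2_conj, conj_den2.
    reflexivity. }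
  split.
  - rewrite Hl, Hm. unfold sigma_a. field. all: repeat split; try assumption.
  - apply RtoC_inj.
    rewrite !RtoC_plus, !RtoC_mult, !RtoC_plus, !Cmod2_conj, Hl, Hm.
    rewrite !conj_sigma by auto. rewrite !conj_opp. unfold sigma_a.
    field. all: repeat split; try assumption.
Qed.

Lemma sigma_disk a z : in_disk a -> in_disk z -> in_disk (sigma_a a z).
Proof.
  intros Ha Hz. pose proof (den_ne a z Ha Hz) as D.
  unfold in_disk, sigma_a in *. rewrite Cmod_div by exact D.
  apply Cmod_gt_0 in D.
  apply Rmult_lt_reg_r with (Cmod (1 - Cconj a * z)%C); [exact D|].
  unfold Rdiv. rewrite Rmult_assoc, Rinv_l by lra. rewrite Rmult_1_r, Rmult_1_l.
  pose proof (Cmod_ge_0 (z - a)%C).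
  apply Rsqr_incrst_0; try lra. unfold Rsqr.
  pose proof (disk_sq a Ha); pose proof (disk_sq z Hz).
  replace (Cmod (z - a)%C * Cmod (z - a)%C) with (Cmod (z - a)%C ^ 2) by ring.
  replace (Cmod (1 - Cconj a * z)%C * Cmod (1 - Cconj a * z)%C) with (Cmod (1 - Cconj a * z)%C ^ 2) by ring.
  rewrite !Cmod_sq. destruct a as [a1 a2], z as [z1 z2]; simpl in *. nra.
Qed.

Lemma sigma_inj a p q : in_disk a -> in_disk p -> in_disk q -> p <> q -> sigma_a a p <> sigma_a a q.
Proof.
  intros Ha Hp Hq Hpq E. apply Hpq.
  pose proof (den_ne a p Ha Hp). pose proof (den_ne a q Ha Hq).
  assert (Haa : (1 - a * Cconj a)%C <> 0%C) by (apply one_minus_ne; [|rewrite Cmod_conj]; auto).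
  assert (Id : (q - p)%C = ((sigma_a a q - sigma_a a p) * ((1 - Cconj a * q) * (1 - Cconj a * p)) / (1 - a * Cconj a))%C).
  { unfold sigma_a. field. auto. }
  rewrite E in Id. unfold Cminus in Id at 2. rewrite Cplus_opp_r, !Cmult_0_l in Id.
  unfold Cdiv in Id. rewrite Cmult_0_l in Id.
  apply Ceq_minus in Id. symmetry. exact Id.
Qed.

Lemma Cinv_ne (z : C) : z <> 0%C -> (/ z)%C <> 0%C.
Proof. intros H E. apply C1_nz. rewrite <- (Cinv_r z H), E. apply Cmult_0_r. Qed.

Lemma de_moivre (r t : R) (n : nat) :
  Cpow (r * cos t, r * sin t) n = (r ^ n * cos (INR n * t), r ^ n * sin (INR n * t)).
Proof.
  induction n as [|n IH].
  - simpl. rewrite Rmult_0_l, cos_0, sin_0. apply Ceq; simpl; ring.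
  - simpl Cpow. rewrite IH. rewrite S_INR.
    replace ((INR n + 1) * t) with (t + INR n * t) by ring.
    rewrite cos_plus, sin_plus. apply Ceq; simpl; ring.
Qed.

Lemma trig0 (x : R) : 0 <= x < 2 * PI -> cos x = 1 -> x = 0.
Proof.
  intros [H1 H2] Hc.
  assert (Hs : sin x = 0).
  { pose proof (sin2_cos2 x). unfold Rsqr in H. rewrite Hc in H. nra. }
  destruct (sin_eq_O_2PI_0 x H1 (Rlt_le _ _ H2) Hs) as [E|[E|E]]; auto.
  - rewrite E, cos_PI in Hc. lra.
  - lra.
Qed.

Lemma pow_lt_strict (x y : R) (n : nat) : 0 <= x -> x < y -> (1 <= n)%nat -> x ^ n < y ^ n.
Proof.
  intros Hx Hxy Hn. destruct n as [|m]; [lia|]. simpl.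
  assert (x ^ m <= y ^ m) by (apply pow_incr; lra).
  assert (0 < y ^ m) by (apply pow_lt; lra).
  assert (0 <= x ^ m) by (apply pow_le; lra).
  nra.
Qed.

Lemma pow_inj_nn (x y : R) (n : nat) : 0 <= x -> 0 <= y -> (1 <= n)%nat -> x ^ n = y ^ n -> x = y.
Proof.
  intros Hx Hy Hn E. destruct (Rtotal_order x y) as [H|[H|H]]; auto.
  - pose proof (pow_lt_strict x y n Hx H Hn). lra.
  - pose proof (pow_lt_strict y x n Hy H Hn). lra.
Qed.

Section Roots.
Variables (k : nat) (a : C) (w : nat -> C) (theta : nat -> R).
Hypothesis Hk : (1 <= k)%nat.
Hypothesis Ha : in_disk a.
Hypothesis Ha0 : a <> 0%C.
Hypothesis Hroot : forall j, (j < 2 * k)%nat -> Cpow (w j) (2 * k) = a.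
Hypothesis Harg : forall j, (j < 2 * k)%nat -> is_arg (w j) (theta j).
Hypothesis Hmono : forall i j, (i < j)%nat -> (j < 2 * k)%nat -> theta i < theta j.

Let A := Cmod a.
Lemma A_pos : 0 < A.
Proof. apply Cmod_gt_0; auto. Qed.

Lemma cs_n j : (j < 2 * k)%nat ->
  cos (INR (2*k) * theta j) = fst a / A /\ sin (INR (2*k) * theta j) = snd a / A /\
  Cmod (w j) ^ (2 * k) = A.
Proof.
  intro Hj. pose proof (Hroot j Hj) as R. destruct (Harg j Hj) as [_ E].
  assert (HA : Cmod (w j) ^ (2*k) = A).
  { unfold A. rewrite <- R. rewrite Cmod_pow. reflexivity. }
  rewrite E in R. rewrite de_moivre in R. rewrite HA in R.
  pose proof A_pos.
  split; [|split]; auto.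
  - rewrite <- R. simpl. field. lra.
  - rewrite <- R. simpl. field. lra.
Qed.

Lemma diff_cos i j : (i < 2 * k)%nat -> (j < 2 * k)%nat ->
  cos (INR (2*k) * (theta j - theta i)) = 1.
Proof.
  intros Hi Hj. destruct (cs_n i Hi) as [ci [si _]]. destruct (cs_n j Hj) as [cj [sj _]].
  rewrite Rmult_minus_distr_l, cos_minus, ci, si, cj, sj.
  pose proof A_pos.
  assert (EA : A ^ 2 = fst a ^ 2 + snd a ^ 2).
  { unfold A, Cmod. rewrite pow2_sqrt; [reflexivity| nra]. }
  field_simplify; [|lra]. rewrite <- EA. field. lra.
Qed.

Lemma INR2k : INR (2 * k) = 2 * INR k.
Proof. rewrite mult_INR. reflexivity. Qed.

Lemma k_pos : 0 < INR k.
Proof. apply lt_0_INR. lia. Qed.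

Lemma gap_ge i j : (i < j)%nat -> (j < 2 * k)%nat -> theta j - theta i >= PI / INR k.
Proof.
  intros Hij Hj. pose proof (Hmono i j Hij Hj).
  pose proof (diff_cos i j ltac:(lia) Hj) as Hc. rewrite INR2k in Hc.
  pose proof k_pos. pose proof PI_RGT_0.
  destruct (Rlt_le_dec (2 * INR k * (theta j - theta i)) (2 * PI)) as [L|L].
  - exfalso. assert (2 * INR k * (theta j - theta i) = 0).
    { apply trig0; auto. split; [|exact L]. nra. }
    nra.
  - apply Rle_ge. apply (Rmult_le_reg_l (2 * INR k)); [lra|].
    field_simplify; lra.
Qed.

Lemma gap_ge_d d i : (i + d < 2 * k)%nat -> theta (i + d)%nat - theta i >= INR d * (PI / INR k).
Proof.
  induction d as [|d IH]; intro H.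
  - rewrite Nat.add_0_r. simpl. lra.
  - rewrite S_INR. pose proof (IH ltac:(lia)).
    pose proof (gap_ge (i + d) (i + S d) ltac:(lia) H).
    lra.
Qed.

Lemma gap_eq j : (j + 1 < 2 * k)%nat -> theta (j + 1)%nat - theta j = PI / INR k.
Proof.
  intro Hj.
  pose proof k_pos. pose proof PI_RGT_0.
  pose proof (gap_ge_d j 0 ltac:(lia)) as G1. simpl Nat.add in G1.
  set (e := (2 * k - 2 - j)%nat).
  pose proof (gap_ge_d e (j + 1) ltac:(unfold e; lia)) as G2.
  replace (j + 1 + e)%nat with (2 * k - 1)%nat in G2 by (unfold e; lia).
  destruct (Harg 0%nat ltac:(lia)) as [[T0 _] _].
  destruct (Harg (2*k-1)%nat ltac:(lia)) as [[_ T1] _].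
  assert (He : INR e = 2 * INR k - 2 - INR j).
  { unfold e. rewrite !minus_INR by lia. rewrite INR2k. simpl. lra. }
  rewrite He in G2.
  assert (Up : theta (j + 1)%nat - theta j < 2 * (PI / INR k)).
  { assert (E1 : (2 * INR k - 2 - INR j) * (PI / INR k) = 2 * PI - (2 + INR j) * (PI / INR k))
      by (field; lra).
    assert (E2 : INR j * (PI / INR k) + 2 * (PI / INR k) = (2 + INR j) * (PI / INR k)) by ring.
    lra. }
  pose proof (gap_ge j (j+1) ltac:(lia) Hj) as Lo.
  set (x := 2 * INR k * (theta (j + 1)%nat - theta j)).
  assert (Hc : cos (x - 2 * PI) = 1).
  { rewrite cos_minus, cos_2PI, sin_2PI. unfold x. rewrite <- INR2k, diff_cos by lia. ring. }
  assert (Hx : x - 2 * PI = 0).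
  { apply trig0; auto. unfold x. split.
    - assert (2 * INR k * (PI / INR k) = 2 * PI) by (field; lra). nra.
    - assert (2 * INR k * (2 * (PI / INR k)) = 4 * PI) by (field; lra). nra. }
  unfold x in Hx. apply (Rmult_eq_reg_l (2 * INR k)); [|lra].
  field_simplify; lra.
Qed.

Lemma theta_lin j : (j < 2 * k)%nat -> theta j = theta 0%nat + INR j * (PI / INR k).
Proof.
  induction j as [|j IH]; intro Hj.
  - simpl. ring.
  - rewrite S_INR. pose proof (gap_eq j ltac:(lia)) as G. rewrite Nat.add_1_r in G.
    rewrite IH in G by lia. lra.
Qed.

Lemma w_disk j : (j < 2 * k)%nat -> in_disk (w j) /\ w j <> 0%C.
Proof.
  intro Hj. destruct (cs_n j Hj) as [_ [_ HA]]. split.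
  - unfold in_disk. destruct (Rlt_le_dec (Cmod (w j)) 1) as [L|L]; auto.
    exfalso. pose proof (pow_R1_Rle _ (2*k) L). unfold in_disk in Ha. fold A in Ha. lra.
  - intro E. rewrite E in HA. rewrite Cmod_0, pow_i in HA by lia. pose proof A_pos. lra.
Qed.

Lemma w_distinct i j : (i < j)%nat -> (j < 2 * k)%nat -> w i <> w j.
Proof.
  intros Hij Hj E.
  pose proof (Hmono i j Hij Hj).
  destruct (Harg i ltac:(lia)) as [[Ti1 Ti2] Ei]. destruct (Harg j Hj) as [[Tj1 Tj2] Ej].
  destruct (w_disk j Hj) as [_ Hnz]. apply Cmod_gt_0 in Hnz.
  assert (Em : Cmod (w i) = Cmod (w j)) by (rewrite E; reflexivity).
  rewrite Ei, Ej, Em in E.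
  pose proof (f_equal fst E) as E1. pose proof (f_equal snd E) as E2. simpl in E1, E2.
  assert (C1 : cos (theta i) = cos (theta j)) by (apply (Rmult_eq_reg_l (Cmod (w j))); lra).
  assert (S1 : sin (theta i) = sin (theta j)) by (apply (Rmult_eq_reg_l (Cmod (w j))); lra).
  assert (cos (theta j - theta i) = 1).
  { rewrite cos_minus, C1, S1. pose proof (sin2_cos2 (theta j)). unfold Rsqr in H0. lra. }
  assert (theta j - theta i = 0) by (apply trig0; auto; lra). lra.
Qed.

Lemma w_opp j : (j < 2 * k)%nat -> w (Nat.modulo (j + k) (2 * k)) = Copp (w j).
Proof.
  intro Hj.
  assert (Hmod : forall i, (i < 2 * k)%nat -> forall i', (i' < 2*k)%nat ->
            theta i' = theta i + PI -> w i' = Copp (w i)).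
  { intros i Hi i' Hi' Et.
    destruct (Harg i Hi) as [_ Ei]. destruct (Harg i' Hi') as [_ Ei'].
    destruct (cs_n i Hi) as [_ [_ Ai]]. destruct (cs_n i' Hi') as [_ [_ Ai']].
    assert (Em : Cmod (w i') = Cmod (w i)).
    { apply (pow_inj_nn _ _ (2*k)); try apply Cmod_ge_0; try lia. congruence. }
    rewrite Ei', Ei, Em, Et, neg_cos, neg_sin. apply Ceq; simpl; ring. }
  pose proof k_pos.
  destruct (Nat.lt_ge_cases j k) as [L|L].
  - rewrite Nat.mod_small by lia. apply Hmod; try lia.
    rewrite (theta_lin (j+k)) by lia. rewrite (theta_lin j) by lia.
    rewrite plus_INR. field. lra.
  - replace (j + k)%nat with ((j - k) + 1 * (2 * k))%nat by lia.
    rewrite Nat.Div0.mod_add, Nat.mod_small by lia.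
    assert (Hr : w j = Copp (w (j - k)%nat)).
    { apply Hmod; try lia.
      rewrite (theta_lin (j-k)) by lia. rewrite (theta_lin j) by lia.
      rewrite minus_INR by lia. field. lra. }
    rewrite Hr. apply Ceq; simpl; ring.
Qed.

End Roots.

Theorem proposition3p7 (k : nat) (a : C) (w : nat -> C) :
  (1 <= k)%nat -> in_disk a -> a <> 0%C ->
  (* w 0, ..., w (2k-1) are 2k-th roots of a ... *)
  (forall j, (j < 2 * k)%nat -> Cpow (w j) (2 * k) = a) ->
  (* ... listed in strictly increasing order of principal argument in [0, 2pi) *)
  (exists theta : nat -> R,
     (forall j, (j < 2 * k)%nat -> is_arg (w j) (theta j)) /\
     (forall i j, (i < j)%nat -> (j < 2 * k)%nat -> theta i < theta j)) ->
  (* (1) opposite zeros: their geodesic passes through -a *)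
  (forall j, (j < 2 * k)%nat ->
     w (Nat.modulo (j + k) (2 * k)) = Copp (w j) /\
     (exists g, geod_through g (sigma_a a (w j)) (sigma_a a (w (Nat.modulo (j + k) (2 * k))))) /\
     (forall g, geod_through g (sigma_a a (w j)) (sigma_a a (w (Nat.modulo (j + k) (2 * k)))) ->
        on_geod g (Copp a))) /\
  (* (2) angles at consecutive zeros equal the angles at consecutive roots *)
  (forall j, (j < 2 * k)%nat ->
     let jm := (Nat.modulo (j + 2 * k - 1) (2 * k)) in
     let jp := (Nat.modulo (j + 1) (2 * k)) in
     (exists g1, geod_through g1 (w jm) (w j)) /\
     (exists g2, geod_through g2 (w j) (w jp)) /\
     (exists h1, geod_through h1 (sigma_a a (w jm)) (sigma_a a (w j))) /\
     (exists h2, geod_through h2 (sigma_a a (w j)) (sigma_a a (w jp))) /\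
     (forall g1 g2 h1 h2,
        geod_through g1 (w jm) (w j) -> geod_through g2 (w j) (w jp) ->
        geod_through h1 (sigma_a a (w jm)) (sigma_a a (w j)) ->
        geod_through h2 (sigma_a a (w j)) (sigma_a a (w jp)) ->
        geod_angle h1 h2 (sigma_a a (w j)) = geod_angle g1 g2 (w j))).
Proof.
  intros Hk Ha Ha0 Hroot [theta [Harg Hmono]].
  assert (WD : forall j, (j < 2 * k)%nat -> in_disk (w j) /\ w j <> 0%C)
    by (intros; eapply w_disk; eauto).
  assert (WN : forall i j, (i < 2 * k)%nat -> (j < 2 * k)%nat -> i <> j -> w i <> w j).
  { intros i j Hi Hj Hij. destruct (Nat.lt_gt_cases i j) as [[L|L] _]; [exact Hij| |].
    - eapply w_distinct; eauto.
    - intro E; symmetry in E; revert E. eapply w_distinct; eauto. }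
  assert (WO : forall j, (j < 2 * k)%nat -> w (Nat.modulo (j + k) (2 * k)) = Copp (w j))
    by (intros; eapply w_opp; eauto).
  assert (Hn : (2 * k <> 0)%nat) by lia.
  split.
  - intros j Hj. rewrite (WO j Hj). destruct (WD j Hj) as [Hd Hnz].
    assert (Hd' : in_disk (- w j)%C) by (unfold in_disk in *; rewrite Cmod_opp; auto).
    split; [reflexivity|split].
    + apply geod_exists; try apply sigma_disk; auto.
      apply sigma_inj; auto. intro E. apply Hnz.
      apply (f_equal fst) in E as E1. apply (f_equal snd) in E as E2.
      destruct (w j); simpl in *. apply Ceq; simpl; lra.
    + intros g [Hg [H1 H2]].
      destruct (opp_coll a (w j) Ha Hd) as [E1 E2].
      eapply coll; [exact Hg | exact H1 | exact H2 | | exact E1 | exact E2].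
      unfold in_disk in *; rewrite Cmod_opp; auto.
  - intros j Hj jm jp.
    assert (Hjm : (jm < 2 * k)%nat) by (apply Nat.mod_upper_bound; exact Hn).
    assert (Hjp : (jp < 2 * k)%nat) by (apply Nat.mod_upper_bound; exact Hn).
    assert (Njm : jm <> j).
    { unfold jm. destruct j as [|j'].
      - rewrite Nat.mod_small by lia. lia.
      - replace (S j' + 2 * k - 1)%nat with (j' + 1 * (2 * k))%nat by lia.
        rewrite Nat.Div0.mod_add, Nat.mod_small by lia. lia. }
    assert (Njp : jp <> j).
    { unfold jp. destruct (Nat.lt_ge_cases (j + 1) (2 * k)) as [L|L].
      - rewrite Nat.mod_small by lia. lia.
      - replace (j + 1)%nat with (0 + 1 * (2 * k))%nat by lia.
        rewrite Nat.Div0.mod_add, Nat.mod_small by lia. lia. }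
    destruct (WD j Hj) as [Dj _]. destruct (WD jm Hjm) as [Dm _]. destruct (WD jp Hjp) as [Dp _].
    pose proof (WN jm j Hjm Hj Njm) as Dmj.
    pose proof (WN j jp Hj Hjp (not_eq_sym Njp)) as Djp.
    split; [|split; [|split; [|split]]].
    + apply geod_exists; auto.
    + apply geod_exists; auto.
    + apply geod_exists; try apply sigma_disk; auto. apply sigma_inj; auto.
    + apply geod_exists; try apply sigma_disk; auto. apply sigma_inj; auto.
    + intros g1 g2 h1 h2 [V1 [O1m O1j]] [V2 [O2j O2p]] [V3 [O3m O3j]] [V4 [O4j O4p]].
      destruct (tangent_par g1 (w j) (w jm) V1 O1j O1m (not_eq_sym Dmj)) as [l1 [L1 T1]].
      destruct (tangent_par g2 (w j) (w jp) V2 O2j O2p Djp) as [l2 [L2 T2]].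
      destruct (tangent_par h1 _ _ V3 O3j O3m (sigma_inj a _ _ Ha Dj Dm (not_eq_sym Dmj))) as [l3 [L3 T3]].
      destruct (tangent_par h2 _ _ V4 O4j O4p (sigma_inj a _ _ Ha Dj Dp Djp)) as [l4 [L4 T4]].
      unfold geod_angle. rewrite T1, T2, T3, T4.
      rewrite !mobius_T by auto.
      set (kap := (/ ((1 - Cconj a * w j) * (1 - Cconj a * w j)))%C).
      assert (Hkap : kap <> 0%C).
      { apply Cinv_ne. apply Cmult_neq_0; apply den_ne; auto. }
      assert (Hrho : forall q, in_disk q ->
                (1 - Cmod a ^ 2) ^ 2 / Cmod (1 - Cconj a * q)%C ^ 2 <> 0).
      { intros q Hq. pose proof (den_ne a q Ha Hq) as D. apply Cmod_gt_0 in D.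
        unfold in_disk in Ha. pose proof (Cmod_ge_0 a).
        apply Rgt_not_eq. apply Rlt_gt. apply Rdiv_lt_0_compat; apply pow_lt; nra. }
      rewrite !Cmult_assoc, <- !RtoC_mult.
      rewrite <- !Cmult_assoc. rewrite angle_inv.
      * pose proof (angle_inv (Tp (w j) (w jm)) (Tp (w j) (w jp)) 1 l1 l2 L1 L2 C1_nz) as HA.
        rewrite !Cmult_1_l in HA. rewrite HA. reflexivity.
      * apply Rmult_integral_contrapositive; split; auto.
      * apply Rmult_integral_contrapositive; split; auto.
      * exact Hkap.
Qed.
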